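(* Let $\alpha>-1$, $j\in\mathbb{N}\cup\{0\}$, $M>0$. Let $\{l_n^{(\alpha)}\}_{n\ge0}$ be the orthonormal Laguerre polynomials with respect to $x^\alpha e^{-x}$ on $(0,\infty)$, normalized so that $l_n^{(\alpha)}(0)>0$, let $\lambda_n=n$, $K_n^{(j,j)}(0,0)=\sum_{i=0}^n\big((l_i^{(\alpha)})^{(j)}(0)\big)^2$, and define $$\widetilde\lambda_n=\lambda_n+M\sum_{i=j+1}^n(\lambda_i-\lambda_{i-1})K_{i-1}^{(j,j)}(0,0),\qquad n\ge j+1.$$ Then $$\lim_{n\to+\infty}\frac{\widetilde\lambda_n}{n^{2j+\alpha+2}}=\frac{M}{(2j+\alpha+2)(2j+\alpha+1)\Gamma^2(\alpha+j+1)}.$$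
   Context: Background: $\lambda_n=n$ are the eigenvalues of the Laguerre equation $-xy''+(x-\alpha-1)y'=ny$, and $\widetilde\lambda_n$ are the eigenvalues of the differential operator $\mathbf{L}$ having as eigenfunctions the polynomials orthonormal with respect to $(f,g)=\int_0^\infty fg\,x^\alpha e^{-x}dx+Mf^{(j)}(0)g^{(j)}(0)$ (with the free parameters $\alpha_1=\dots=\alpha_j=0$). The sign normalization of $l_n^{(\alpha)}$ does not affect the quantities involved. *)

(* Defs.v *)
From Stdlib Require Import Reals List Arith.
From Coquelicot Require Import Coquelicot.
Open Scope R_scope.

Definition sumR (f : nat -> R) (m n : nat) : R :=
  fold_right Rplus 0 (map f (seq m (S n - m))).

Definition prodR (f : nat -> R) (m n : nat) : R :=
  fold_right Rmult 1 (map f (seq m (S n - m))).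

Definition Gamma (s : R) : R :=
  RInt_gen (fun t => Rpower t (s - 1) * exp (- t)) (at_right 0) (Rbar_locally p_infty).

Definition binomR (r : R) (m : nat) : R :=
  prodR (fun p => r - INR p + 1) 1 m / INR (fact m).

Definition laguerre (a : R) (n : nat) (x : R) : R :=
  sumR (fun k => (-1) ^ k * binomR (INR n + a) (n - k) * x ^ k / INR (fact k)) 0 n.

(* squared L^2(x^a e^{-x} dx, (0,oo)) norm of L_n^(a): Gamma(n+a+1)/n! *)
Definition laguerre_norm2 (a : R) (n : nat) : R :=
  Gamma (INR n + a + 1) / INR (fact n).

Definition laguerre_on (a : R) (n : nat) (x : R) : R :=
  laguerre a n x / sqrt (laguerre_norm2 a n).

Definition Kjj (a : R) (j n : nat) : R :=
  sumR (fun i => (Derive_n (laguerre_on a i) j 0) ^ 2) 0 n.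

Definition lam (n : nat) : R := INR n.

Definition lam_tilde (a M : R) (j n : nat) : R :=
  lam n + M * sumR (fun i => (lam i - lam (i - 1)) * Kjj a j (i - 1)) (j + 1) n.

(* Main.v *)
Require Import Defs.
From Stdlib Require Import Reals.
From Coquelicot Require Import Coquelicot.
From Stdlib Require Import List Arith ZArith Lra Lia Psatz Classical FunctionalExtensionality.
Open Scope R_scope.


Definition gf (s t : R) := Rpower t (s - 1) * exp (- t).

Lemma exp_le_mono x y : x <= y -> exp x <= exp y.
Proof. intros [H|H]. apply Rlt_le, exp_increasing, H. subst; lra. Qed.

Lemma gf_pos s t : 0 < gf s t.
Proof. unfold gf, Rpower. apply Rmult_lt_0_compat; apply exp_pos. Qed.

Lemma gf_cont s t : 0 < t -> continuous (gf s) t.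
Proof. intros. apply (ex_derive_continuous (gf s)). unfold gf, Rpower. auto_derive. lra. Qed.

Lemma Rpow_cont s t : 0 < t -> continuous (fun x => Rpower x s) t.
Proof. intros. apply (ex_derive_continuous (fun x => Rpower x s)). unfold Rpower. auto_derive. lra. Qed.

Lemma ln_le_sub1 y : 0 < y -> ln y <= y - 1.
Proof. intros. pose proof (exp_ineq1_le (ln y)). rewrite exp_ln in H0; lra. Qed.

Lemma ball_R (x e y : R) : Rabs (y - x) < e -> ball x e y.
Proof. intros. exact H. Qed.

Lemma gf_bound_inf s : exists C, 0 < C /\ forall t, 1 <= t -> gf s t <= C * exp (- t / 2).
Proof.
  set (c := Rabs (s - 1) + 1).
  assert (hc : 1 <= c) by (unfold c; pose proof (Rabs_pos (s-1)); lra).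
  exists (exp (c * ln (2 * c))). split. apply exp_pos.
  intros t ht. unfold gf, Rpower. rewrite <- exp_plus, <- exp_plus.
  apply exp_le_mono.
  assert (hlt : 0 <= ln t) by (rewrite <- ln_1; apply ln_le; lra).
  assert (h1 : (s - 1) * ln t <= c * ln t).
  { apply Rmult_le_compat_r; auto. unfold c. pose proof (Rle_abs (s-1)). lra. }
  assert (h2 : ln t <= t / (2 * c) - 1 + ln (2 * c)).
  { pose proof (ln_le_sub1 (t / (2*c))).
    rewrite ln_div in H by lra. assert (0 < t / (2*c)). apply Rdiv_lt_0_compat; lra. lra. }
  assert (h3 : c * ln t <= c * (t / (2 * c) - 1 + ln (2 * c))).
  { apply Rmult_le_compat_l; lra. }
  assert (h4 : c * (t / (2 * c) - 1 + ln (2 * c)) = t / 2 - c + c * ln (2 * c)) by (field; lra).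
  lra.
Qed.
Lemma lub_approx (E : R -> Prop) L eps : is_lub E L -> 0 < eps -> exists y, E y /\ L - eps < y.
Proof.
  intros [Hub Hl] he. apply NNPP. intro Hn.
  assert (is_upper_bound E (L - eps)).
  { intros y Ey. apply Rnot_lt_le. intro. apply Hn. exists y; auto. }
  specialize (Hl _ H). lra.
Qed.

Lemma RInt_mono_upper (f : R -> R) c b0 b : c <= b0 <= b ->
  (forall x y, c <= x -> c <= y -> ex_RInt f x y) -> (forall x, c <= x -> 0 <= f x) ->
  RInt f c b0 <= RInt f c b.
Proof.
  intros h Hex Hp. rewrite <- (RInt_Chasles f c b0 b) by (apply Hex; lra).
  assert (0 <= RInt f b0 b). apply RInt_ge_0. lra. apply Hex; lra. intros; apply Hp; lra.
  unfold plus; simpl. lra.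
Qed.

Lemma ex_RInt_gen_right (f : R -> R) (c B : R) :
  (forall x, c <= x -> continuous f x) -> (forall x, c <= x -> 0 <= f x) ->
  (forall b, c <= b -> RInt f c b <= B) ->
  ex_RInt_gen f (at_point c) (Rbar_locally p_infty).
Proof.
  intros Hc Hp HB.
  assert (Hex : forall x y, c <= x -> c <= y -> ex_RInt f x y).
  { intros x y hx hy. apply (ex_RInt_continuous (V:=R_CompleteNormedModule)). intros z hz. apply Hc.
    revert hz; unfold Rmin, Rmax; destruct (Rle_dec x y); lra. }
  set (E := fun y => exists b, c <= b /\ y = RInt f c b).
  destruct (completeness E) as [L HL].
  { exists B. intros y [b [hb ->]]. auto. }
  { exists (RInt f c c). exists c. split; auto; lra. }
  exists L. intros P [eps HP].
  destruct (lub_approx E L eps HL (cond_pos eps)) as [y [[b0 [hb0 ->]] hy]].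
  apply (Filter_prod _ _ _ (fun x => x = c) (fun y => Rmax b0 c < y)).
  reflexivity. exists (Rmax b0 c); auto.
  intros x y -> hy'. simpl. exists (RInt f c y).
  assert (hb0' : b0 <= Rmax b0 c) by apply Rmax_l.
  assert (hc' : c <= Rmax b0 c) by apply Rmax_r.
  split. apply (RInt_correct (V:=R_CompleteNormedModule)), Hex; lra.
  apply HP. apply ball_R.
  assert (RInt f c y <= L). { apply (proj1 HL). exists y. split; auto; lra. }
  assert (RInt f c b0 <= RInt f c y). { apply RInt_mono_upper; auto; lra. }
  apply Rabs_def1; lra.
Qed.

Lemma RInt_mono_lower (f : R -> R) a a0 c : 0 < a <= a0 -> a0 <= c ->
  (forall x y, 0 < x -> 0 < y -> ex_RInt f x y) -> (forall x, 0 < x -> 0 <= f x) ->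
  RInt f a0 c <= RInt f a c.
Proof.
  intros h h' Hex Hp. rewrite <- (RInt_Chasles f a a0 c) by (apply Hex; lra).
  assert (0 <= RInt f a a0). apply RInt_ge_0. lra. apply Hex; lra. intros; apply Hp; lra.
  unfold plus; simpl. lra.
Qed.

Lemma ex_RInt_gen_left (f : R -> R) (c B : R) : 0 < c ->
  (forall x, 0 < x -> continuous f x) -> (forall x, 0 < x -> 0 <= f x) ->
  (forall a, 0 < a <= c -> RInt f a c <= B) ->
  ex_RInt_gen f (at_right 0) (at_point c).
Proof.
  intros hc Hc Hp HB.
  assert (Hex : forall x y, 0 < x -> 0 < y -> ex_RInt f x y).
  { intros x y hx hy. apply (ex_RInt_continuous (V:=R_CompleteNormedModule)). intros z hz. apply Hc.
    revert hz; unfold Rmin, Rmax; destruct (Rle_dec x y); lra. }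
  set (E := fun y => exists a, 0 < a <= c /\ y = RInt f a c).
  destruct (completeness E) as [L HL].
  { exists B. intros y [b [hb ->]]. auto. }
  { exists (RInt f c c). exists c. split; auto; lra. }
  exists L. intros P [eps HP].
  destruct (lub_approx E L eps HL (cond_pos eps)) as [y [[a0 [ha0 ->]] hy]].
  apply (Filter_prod _ _ _ (fun x => 0 < x < a0) (fun y => y = c)).
  - exists (mkposreal a0 (proj1 ha0)). intros x hx hx0. split; auto.
    unfold ball in hx; simpl in hx; unfold AbsRing_ball, abs, minus, plus, opp in hx; simpl in hx.
    apply Rabs_def2 in hx. lra.
  - reflexivity.
  - intros x y hx ->. simpl. exists (RInt f x c).
    split. apply (RInt_correct (V:=R_CompleteNormedModule)), Hex; lra.
    apply HP. apply ball_R.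
    assert (RInt f x c <= L). { apply (proj1 HL). exists x. split; auto; lra. }
    assert (RInt f a0 c <= RInt f x c). { apply RInt_mono_lower; auto; lra. }
    apply Rabs_def1; lra.
Qed.

Lemma is_derive_Rpow s t : 0 < t -> is_derive (fun x => Rpower x s) t (s * Rpower t (s - 1)).
Proof. intros. apply is_derive_Reals, derivable_pt_lim_power; auto. Qed.

Lemma gf_ex_RInt s x y : 0 < x -> 0 < y -> ex_RInt (gf s) x y.
Proof.
  intros hx hy. apply (ex_RInt_continuous (V:=R_CompleteNormedModule)). intros z hz. apply gf_cont.
  revert hz; unfold Rmin, Rmax; destruct (Rle_dec x y); lra.
Qed.

Lemma gf_left_bound s a : 0 < s -> 0 < a <= 1 -> RInt (gf s) a 1 <= / s.
Proof.
  intros hs ha.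
  assert (Hi : is_RInt (fun t => s * Rpower t (s - 1)) a 1 (Rpower 1 s - Rpower a s)).
  { apply (is_RInt_derive (V:=R_CompleteNormedModule) (fun t => Rpower t s)).
    - intros x hx. apply is_derive_Rpow. revert hx; unfold Rmin, Rmax; destruct (Rle_dec a 1); lra.
    - intros x hx. apply (ex_derive_continuous (fun t => s * Rpower t (s - 1))). unfold Rpower. auto_derive.
      revert hx; unfold Rmin, Rmax; destruct (Rle_dec a 1); lra. }
  apply is_RInt_scal with (k := / s) in Hi.
  assert (Hi2 : is_RInt (fun t => Rpower t (s - 1)) a 1 (scal (/ s) (Rpower 1 s - Rpower a s))).
  { eapply is_RInt_ext; [|exact Hi]. intros x _. unfold scal; simpl; unfold mult; simpl. field. lra. }
  apply Rle_trans with (RInt (fun t => Rpower t (s - 1)) a 1).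
  - apply RInt_le. lra. apply gf_ex_RInt; lra. eexists; eauto.
    intros x hx. unfold gf.
    rewrite <- (Rmult_1_r (Rpower x (s - 1))) at 2.
    apply Rmult_le_compat_l. unfold Rpower; apply Rlt_le, exp_pos.
    rewrite <- exp_0. apply exp_le_mono. lra.
  - rewrite (is_RInt_unique (V:=R_CompleteNormedModule) _ _ _ _ Hi2). unfold scal; simpl; unfold mult; simpl.
    replace (Rpower 1 s) with 1 by (unfold Rpower; rewrite ln_1, Rmult_0_r, exp_0; auto).
    assert (0 < Rpower a s) by (unfold Rpower; apply exp_pos).
    assert (0 < / s) by (apply Rinv_0_lt_compat; lra).
    rewrite <- (Rmult_1_r (/ s)) at 2. apply Rmult_le_compat_l; lra.
Qed.

Lemma gf_right_bound s : exists B, forall b, 1 <= b -> RInt (gf s) 1 b <= B.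
Proof.
  destruct (gf_bound_inf s) as [C [hC HC]].
  exists (2 * C). intros b hb.
  assert (Hi : is_RInt (fun t => C * exp (- t / 2)) 1 b
                 ((-2 * C * exp (- b / 2)) - (-2 * C * exp (- 1 / 2)))).
  { apply (is_RInt_derive (V:=R_CompleteNormedModule) (fun t => -2 * C * exp (- t / 2))).
    - intros x hx. auto_derive. auto. unfold Rdiv; field.
    - intros x hx. apply (ex_derive_continuous (fun t => C * exp (- t / 2))). auto_derive. auto. }
  apply Rle_trans with (RInt (fun t => C * exp (- t / 2)) 1 b).
  - apply RInt_le. lra. apply gf_ex_RInt; lra. eexists; eauto.
    intros x hx. apply HC; lra.
  - rewrite (is_RInt_unique (V:=R_CompleteNormedModule) _ _ _ _ Hi).
    assert (0 < exp (- b / 2)) by apply exp_pos.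
    assert (exp (- 1 / 2) <= 1) by (rewrite <- exp_0; apply exp_le_mono; lra).
    nra.
Qed.

Lemma Gamma_ex s : 0 < s -> ex_RInt_gen (gf s) (at_right 0) (Rbar_locally p_infty).
Proof.
  intros hs. apply (ex_RInt_gen_Chasles (gf s) 1).
  - apply (ex_RInt_gen_left (gf s) 1 (/ s)). lra. apply gf_cont. intros; apply Rlt_le, gf_pos.
    intros; apply gf_left_bound; auto.
  - destruct (gf_right_bound s) as [B HB].
    apply (ex_RInt_gen_right (gf s) 1 B). intros; apply gf_cont; lra. intros; apply Rlt_le, gf_pos.
    auto.
Qed.

Lemma Gamma_is s : 0 < s -> is_RInt_gen (gf s) (at_right 0) (Rbar_locally p_infty) (Gamma s).
Proof.
  intros hs. unfold Gamma. change (fun t => Rpower t (s - 1) * exp (- t)) with (gf s).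
  apply (RInt_gen_correct (V:=R_CompleteNormedModule)). apply Gamma_ex; auto.
Qed.

Lemma locally_pos x : 0 < x -> locally x (fun y => 0 < y).
Proof.
  intros hx. assert (h : 0 < x / 2) by lra. exists (mkposreal _ h). intros y hy.
  unfold ball in hy; simpl in hy; unfold AbsRing_ball, abs, minus, plus, opp in hy; simpl in hy.
  apply Rabs_def2 in hy. lra.
Qed.

Lemma prod_pos_filter (P : R * R -> Prop) :
  (forall a b, 0 < a -> 0 < b -> P (a, b)) -> filter_prod (at_right 0) (Rbar_locally p_infty) P.
Proof.
  intros H. apply (Filter_prod _ _ _ (fun x => 0 < x) (fun y => 0 < y)).
  - exists (mkposreal 1 Rlt_0_1). auto.
  - exists 0. auto.
  - auto.
Qed.

Lemma minmax_pos a b x : 0 < a -> 0 < b -> Rmin a b <= x <= Rmax a b -> 0 < x.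
Proof. unfold Rmin, Rmax; destruct (Rle_dec a b); lra. Qed.

Lemma exp_small eps C : 0 < eps -> 0 < C -> exists M, forall t, M < t -> C * exp (- t / 2) < eps.
Proof.
  intros he hC. exists (2 * ln (C / eps)). intros t ht.
  assert (exp (- t / 2) < exp (- ln (C / eps))) by (apply exp_increasing; lra).
  rewrite exp_Ropp, exp_ln in H by (apply Rdiv_lt_0_compat; lra).
  replace (/ (C / eps)) with (eps / C) in H by (field; lra).
  apply Rmult_lt_compat_l with (r := C) in H; auto.
  replace (C * (eps / C)) with eps in H by (field; lra). lra.
Qed.

Lemma Rpower_lt_base x y s : 0 < s -> 0 < x -> x < y -> Rpower x s < Rpower y s.
Proof.
  intros hs hx hxy. unfold Rpower. apply exp_increasing. apply Rmult_lt_compat_l; auto.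
  apply ln_increasing; auto.
Qed.

Lemma lim_F0 s : 0 < s ->
  filterlim (fun t => - Rpower t s * exp (- t)) (at_right 0) (locally 0).
Proof.
  intros hs. apply filterlim_locally. intros eps.
  set (d := Rpower eps (/ s)).
  assert (hd : 0 < d) by (unfold d, Rpower; apply exp_pos).
  exists (mkposreal d hd). intros y hy hy0. simpl in hy.
  unfold ball in hy; simpl in hy; unfold AbsRing_ball, abs, minus, plus, opp in hy; simpl in hy.
  apply Rabs_def2 in hy. apply ball_R.
  assert (h1 : Rpower y s < Rpower d s) by (apply Rpower_lt_base; lra).
  unfold d in h1. rewrite Rpower_mult in h1.
  replace (/ s * s) with 1 in h1 by (field; lra). rewrite Rpower_1 in h1 by apply cond_pos.
  assert (h2 : exp (- y) <= 1) by (rewrite <- exp_0; apply exp_le_mono; lra).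
  assert (h3 : 0 < Rpower y s) by (unfold Rpower; apply exp_pos).
  assert (h4 : 0 < exp (- y)) by apply exp_pos.
  apply Rabs_def1; nra.
Qed.

Lemma lim_Finf s :
  filterlim (fun t => - Rpower t s * exp (- t)) (Rbar_locally p_infty) (locally 0).
Proof.
  apply filterlim_locally. intros eps.
  destruct (gf_bound_inf (s + 1)) as [C [hC HC]].
  destruct (exp_small eps C (cond_pos eps) hC) as [M HM].
  exists (Rmax M 1). intros y hy. apply ball_R.
  assert (hM : M < y) by (pose proof (Rmax_l M 1); lra).
  assert (h1 : 1 <= y) by (pose proof (Rmax_r M 1); lra).
  specialize (HC y h1). specialize (HM y hM).
  unfold gf in HC. replace (s + 1 - 1) with s in HC by ring.
  assert (h3 : 0 < Rpower y s) by (unfold Rpower; apply exp_pos).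
  assert (h4 : 0 < exp (- y)) by apply exp_pos.
  apply Rabs_def1; nra.
Qed.

Lemma Gamma_succ s : 0 < s -> Gamma (s + 1) = s * Gamma s.
Proof.
  intros hs.
  set (F := fun t => - Rpower t s * exp (- t)).
  set (DF := fun t => gf (s + 1) t - s * gf s t).
  assert (HD : forall t, 0 < t -> is_derive F t (DF t)).
  { intros t ht. unfold F, DF, gf. replace (s + 1 - 1) with s by ring.
    assert (E : Rpower t (s - 1) = Rpower t s / t).
    { replace (s - 1) with (s + - (1)) by ring. rewrite Rpower_plus, Rpower_Ropp, Rpower_1 by lra.
      unfold Rdiv; auto. }
    rewrite E. unfold Rpower. auto_derive. lra. field. lra. }
  assert (H1 : is_RInt_gen (Derive F) (at_right 0) (Rbar_locally p_infty) (0 - 0)).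
  { apply is_RInt_gen_Derive.
    - apply prod_pos_filter. intros a b ha hb x hx. eexists. apply HD. apply (minmax_pos a b x ha hb); exact hx.
    - apply prod_pos_filter. intros a b ha hb x hx.
      assert (hx0 : 0 < x) by (apply (minmax_pos a b x ha hb); exact hx).
      apply (continuous_ext_loc _ DF).
      + generalize (locally_pos x hx0). apply filter_imp. intros y hy. symmetry. apply is_derive_unique, HD; auto.
      + apply (ex_derive_continuous DF). unfold DF, gf, Rpower. auto_derive. lra.
    - apply lim_F0; auto.
    - apply lim_Finf. }
  assert (H2 : is_RInt_gen DF (at_right 0) (Rbar_locally p_infty) (0 - 0)).
  { eapply is_RInt_gen_ext; [| exact H1]. apply prod_pos_filter. intros a b ha hb x hx.
    apply is_derive_unique, HD. simpl in hx. apply (minmax_pos a b x ha hb). split; apply Rlt_le; apply hx. }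
  assert (H3 : is_RInt_gen DF (at_right 0) (Rbar_locally p_infty) (minus (Gamma (s + 1)) (scal s (Gamma s)))).
  { exact (is_RInt_gen_minus (V:=R_NormedModule) (gf (s + 1)) (fun t => scal s (gf s t)) _ _
      (Gamma_is (s + 1) (Rplus_lt_0_compat s 1 hs Rlt_0_1)) (is_RInt_gen_scal (V:=R_NormedModule) (gf s) s _ (Gamma_is s hs))). }
  apply (is_RInt_gen_unique (V:=R_CompleteNormedModule)) in H2.
  apply (is_RInt_gen_unique (V:=R_CompleteNormedModule)) in H3. rewrite H2 in H3.
  unfold minus, scal, plus, opp in H3; simpl in H3. unfold mult in H3; simpl in H3. lra.
Qed.

Lemma at_right_le_locally x : filter_le (at_right x) (locally x).
Proof. intros P HP. unfold at_right, within. generalize HP. apply filter_imp. auto. Qed.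

Lemma Gamma_one : Gamma 1 = 1.
Proof.
  set (F := fun t => - exp (- t)).
  assert (HD : forall t, is_derive F t (exp (- t))).
  { intros t. unfold F. auto_derive. auto. ring. }
  assert (H1 : is_RInt_gen (Derive F) (at_right 0) (Rbar_locally p_infty) (0 - (-1))).
  { apply is_RInt_gen_Derive.
    - apply prod_pos_filter. intros a b ha hb x hx. eexists. apply HD.
    - apply prod_pos_filter. intros a b ha hb x hx.
      apply (continuous_ext_loc _ (fun t => exp (- t))).
      + apply filter_forall. intros y. symmetry. apply is_derive_unique, HD.
      + apply (ex_derive_continuous (fun t => exp (- t))). auto_derive. auto.
    - apply (filterlim_filter_le_1 (F := locally 0)). apply at_right_le_locally.
      replace (-1) with (F 0) by (unfold F; rewrite Ropp_0, exp_0; auto).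
      apply (ex_derive_continuous F). eexists; apply HD.
    - apply filterlim_locally. intros eps.
      destruct (exp_small eps 1 (cond_pos eps) Rlt_0_1) as [M HM].
      exists (Rmax M 0). intros y hy. apply ball_R.
      assert (hM : M < y) by (pose proof (Rmax_l M 0); lra).
      assert (h0 : 0 <= y) by (pose proof (Rmax_r M 0); lra).
      specialize (HM y hM).
      assert (exp (- y) <= exp (- y / 2)) by (apply exp_le_mono; lra).
      assert (0 < exp (- y)) by apply exp_pos.
      unfold F. apply Rabs_def1; lra. }
  assert (H2 : is_RInt_gen (gf 1) (at_right 0) (Rbar_locally p_infty) (0 - (-1))).
  { eapply is_RInt_gen_ext; [| exact H1]. apply prod_pos_filter. intros a b ha hb x hx.
    rewrite (is_derive_unique _ _ _ (HD x)). unfold gf. replace (1 - 1) with 0 by ring.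
    unfold Rpower. rewrite Rmult_0_l, exp_0. symmetry; apply Rmult_1_l. }
  apply (is_RInt_gen_unique (V:=R_CompleteNormedModule)) in H2.
  pose proof (is_RInt_gen_unique (V:=R_CompleteNormedModule) _ _ (Gamma_is 1 Rlt_0_1)) as H3.
  rewrite H2 in H3. lra.
Qed.

Lemma Gamma_nat n : Gamma (INR n + 1) = INR (fact n).
Proof.
  induction n.
  - simpl. rewrite Rplus_0_l. apply Gamma_one.
  - rewrite S_INR, Gamma_succ, IHn. rewrite fact_simpl, mult_INR, S_INR. ring.
    pose proof (pos_INR n). lra.
Qed.

Lemma exp_tangent x m : exp m * (1 + x - m) <= exp x.
Proof.
  pose proof (exp_ineq1_le (x - m)). replace x with (m + (x - m)) at 2 by ring.
  rewrite exp_plus. pose proof (exp_pos m). nra.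
Qed.

Lemma rpow_amgm u b : 0 < u -> 0 <= b <= 1 -> Rpower u b <= 1 - b + b * u.
Proof.
  intros hu hb. unfold Rpower. set (m := b * ln u).
  pose proof (exp_tangent 0 m) as h0. pose proof (exp_tangent (ln u) m) as h1.
  rewrite exp_0 in h0. rewrite exp_ln in h1 by auto.
  assert (exp m = (1 - b) * (exp m * (1 + 0 - m)) + b * (exp m * (1 + ln u - m))) by (unfold m; ring).
  nra.
Qed.

Lemma gf_shift s b x : 0 < x -> gf (s + b) x = Rpower x b * gf s x.
Proof.
  intros hx. unfold gf. replace (s + b - 1) with (b + (s - 1)) by ring. rewrite Rpower_plus. ring.
Qed.

Lemma Gamma_upper s b : 0 < s -> 0 <= b <= 1 -> Gamma (s + b) <= Rpower s b * Gamma s.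
Proof.
  intros hs hb.
  set (k1 := (1 - b) * Rpower s b). set (k2 := b * Rpower s (b - 1)).
  assert (Hg : is_RInt_gen (fun y => plus (scal k1 (gf s y)) (scal k2 (gf (s + 1) y)))
                 (at_right 0) (Rbar_locally p_infty) (plus (scal k1 (Gamma s)) (scal k2 (Gamma (s + 1))))).
  { apply (is_RInt_gen_plus (V:=R_NormedModule)); apply (is_RInt_gen_scal (V:=R_NormedModule)); apply Gamma_is; lra. }
  assert (Hf := Gamma_is (s + b) ltac:(lra)).
  assert (Hle : norm (Gamma (s + b)) <= plus (scal k1 (Gamma s)) (scal k2 (Gamma (s + 1)))).
  { apply (RInt_gen_norm (V:=R_CompleteNormedModule) (Fa:=at_right 0) (Fb:=Rbar_locally p_infty) (gf (s + b)) (fun y => plus (scal k1 (gf s y)) (scal k2 (gf (s + 1) y)))); [ | | exact Hf | exact Hg].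
    - apply (Filter_prod _ _ _ (fun x => 0 < x < 1) (fun y => 1 < y)).
      + exists (mkposreal 1 Rlt_0_1). intros y hy hy0.
        unfold ball in hy; simpl in hy; unfold AbsRing_ball, abs, minus, plus, opp in hy; simpl in hy.
        apply Rabs_def2 in hy. lra.
      + exists 1. auto.
      + intros x y hx hy. simpl. lra.
    - apply prod_pos_filter. intros a c ha hc x hx. simpl in hx.
      assert (hx0 : 0 < x) by lra.
      unfold norm; simpl; unfold abs; simpl.
      rewrite Rabs_pos_eq by (apply Rlt_le, gf_pos).
      unfold plus, scal; simpl; unfold mult; simpl.
      rewrite gf_shift by auto.
      replace (s + 1) with (s + 1) by ring. rewrite (gf_shift s 1 x hx0), Rpower_1 by auto.
      assert (E1 : Rpower x b = Rpower s b * Rpower (x / s) b).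
      { rewrite Rpower_mult_distr. f_equal. field. lra. lra. apply Rdiv_lt_0_compat; lra. }
      assert (E2 : Rpower s (b - 1) = Rpower s b / s).
      { replace (b - 1) with (b + - (1)) by ring. rewrite Rpower_plus, Rpower_Ropp, Rpower_1 by lra. unfold Rdiv; auto. }
      rewrite E1. unfold k1, k2. rewrite E2.
      pose proof (rpow_amgm (x / s) b ltac:(apply Rdiv_lt_0_compat; lra) hb) as HA.
      pose proof (gf_pos s x). assert (0 < Rpower s b) by (unfold Rpower; apply exp_pos).
      replace ((1 - b) * Rpower s b * gf s x + b * (Rpower s b / s) * (x * gf s x))
        with (Rpower s b * gf s x * (1 - b + b * (x / s))) by (field; lra).
      
      replace (Rpower s b * Rpower (x / s) b * gf s x) with (Rpower s b * gf s x * Rpower (x / s) b) by ring.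
      apply Rmult_le_compat_l. nra. auto. }
  unfold norm in Hle; simpl in Hle; unfold abs in Hle; simpl in Hle.
  unfold plus, scal in Hle; simpl in Hle; unfold mult in Hle; simpl in Hle.
  rewrite Gamma_succ in Hle by auto. unfold k1, k2 in Hle.
  assert (E2 : Rpower s (b - 1) * s = Rpower s b).
  { replace (b - 1) with (b + - (1)) by ring. rewrite Rpower_plus, Rpower_Ropp, Rpower_1 by lra. field. lra. }
  pose proof (Rle_abs (Gamma (s + b))).
  replace ((1 - b) * Rpower s b * Gamma s + b * Rpower s (b - 1) * (s * Gamma s)) with
    (Rpower s b * Gamma s) in Hle.
  lra.
  rewrite <- E2. ring.
Qed.

Lemma Gamma_lower s b : 0 < s -> 0 <= b <= 1 -> s * Gamma s <= Rpower (s + b) (1 - b) * Gamma (s + b).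
Proof.
  intros hs hb. rewrite <- Gamma_succ by auto.
  replace (s + 1) with (s + b + (1 - b)) by ring. apply Gamma_upper; lra.
Qed.

Lemma Gamma_pos s : 0 < s -> 0 < Gamma s.
Proof.
  assert (base : forall s, 0 < s <= 1 -> 0 < Gamma s).
  { intros t ht. pose proof (Gamma_upper t (1 - t) ltac:(lra) ltac:(lra)) as H.
    replace (t + (1 - t)) with 1 in H by ring. rewrite Gamma_one in H.
    assert (0 < Rpower t (1 - t)) by (unfold Rpower; apply exp_pos).
    destruct (Rle_or_lt (Gamma t) 0); auto. nra. }
  assert (ind : forall n, forall s, 0 < s <= INR n + 1 -> 0 < Gamma s).
  { induction n; intros t ht.
    - simpl in ht. apply base; lra.
    - destruct (Rle_or_lt t 1). apply base; lra.
      rewrite S_INR in ht.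
      replace t with ((t - 1) + 1) by ring. rewrite Gamma_succ by lra.
      apply Rmult_lt_0_compat. lra. apply IHn. lra. }
  intros hs. destruct (archimed s) as [h1 h2].
  assert (hz : (0 < up s)%Z) by (apply lt_0_IZR; lra).
  apply (ind (Z.to_nat (up s)) s). split; auto.
  rewrite INR_IZR_INZ, Z2Nat.id by lia. lra.
Qed.

Lemma lim_inv_n : is_lim_seq (fun n => / INR n) 0.
Proof.
  replace (Finite 0) with (Rbar_inv p_infty) by reflexivity. apply is_lim_seq_inv.
  apply is_lim_seq_INR. discriminate.
Qed.

Lemma lim_one_plus c : is_lim_seq (fun n => 1 + c / INR n) 1.
Proof.
  pose proof (is_lim_seq_plus' _ _ 1 (c * 0) (is_lim_seq_const 1)
     (is_lim_seq_mult' _ _ c 0 (is_lim_seq_const c) lim_inv_n)) as H.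
  rewrite Rmult_0_r, Rplus_0_r in H. exact H.
Qed.

Lemma lim_Rpow u c : is_lim_seq u 1 -> is_lim_seq (fun n => Rpower (u n) c) 1.
Proof.
  intros H.
  assert (Hc : continuity_pt (fun x => Rpower x c) 1).
  { apply continuity_pt_filterlim. apply (Rpow_cont c 1 Rlt_0_1). }
  pose proof (is_lim_seq_continuous _ u 1 Hc H) as H'.
  cbv beta in H'. replace (Rpower 1 c) with 1 in H' by (unfold Rpower; rewrite ln_1, Rmult_0_r, exp_0; auto).
  exact H'.
Qed.

Lemma lim_fact_ratio m : is_lim_seq (fun n => INR (fact (n + m)) / (INR (fact n) * INR n ^ m)) 1.
Proof.
  induction m.
  - eapply is_lim_seq_ext; [| apply is_lim_seq_const]. intros n. simpl. rewrite Nat.add_0_r.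
    field. apply INR_fact_neq_0.
  - replace 1 with (1 * 1) by ring.
    apply (is_lim_seq_ext_loc (fun n => INR (fact (n + m)) / (INR (fact n) * INR n ^ m) * (1 + INR (S m) / INR n))).
    + exists 1%nat. intros n hn.
      assert (hn' : 0 < INR n) by (apply lt_0_INR; lia).
      replace (n + S m)%nat with (S (n + m)) by lia. rewrite fact_simpl, mult_INR.
      rewrite !S_INR, plus_INR. simpl.
      assert (h1 := INR_fact_neq_0 n). assert (h2 : INR n ^ m <> 0) by (apply pow_nonzero; lra).
      field. repeat split; auto; lra.
    + apply is_lim_seq_mult'; auto. apply lim_one_plus.
Qed.

Lemma Rpower_div x y c : 0 < x -> 0 < y -> Rpower x c / Rpower y c = Rpower (x / y) c.
Proof.
  intros hx hy. unfold Rpower. rewrite ln_div by auto.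
  replace (c * (ln x - ln y)) with (c * ln x + - (c * ln y)) by ring.
  rewrite exp_plus, exp_Ropp. unfold Rdiv. ring.
Qed.

Lemma Rpower_pos x c : 0 < Rpower x c.
Proof. unfold Rpower. apply exp_pos. Qed.

Lemma lim_ratio_shift c : is_lim_seq (fun n => (INR n + c) / INR n) 1.
Proof.
  apply (is_lim_seq_ext_loc (fun n => 1 + c / INR n)). exists 1%nat. intros n hn.
  assert (0 < INR n) by (apply lt_0_INR; lia). field. lra. apply lim_one_plus.
Qed.

Lemma Gamma_ratio a : -1 < a ->
  is_lim_seq (fun n => Gamma (INR n + a + 1) / (INR (fact n) * Rpower (INR n) a)) 1.
Proof.
  intros ha. destruct (archimed (a + 1)) as [h1 h2].
  set (z := up (a + 1)) in *.
  assert (hz : (0 < z)%Z) by (apply lt_0_IZR; lra).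
  set (m := Z.to_nat (z - 1)).
  assert (hm : INR m = IZR z - 1).
  { unfold m. rewrite INR_IZR_INZ, Z2Nat.id by lia. rewrite minus_IZR. reflexivity. }
  set (b := a + 1 - INR m).
  assert (hb : 0 <= b <= 1) by (unfold b; lra).
  set (A := fun n => INR (fact (n + m)) / (INR (fact n) * INR n ^ m)).
  apply (is_lim_seq_le_le_loc (fun n => A n * Rpower ((INR n + (INR m + b)) / INR n) (b - 1)) _
                              (fun n => A n * Rpower ((INR n + INR m) / INR n) (b - 1))).
  - exists 1%nat. intros n hn.
    assert (hn0 : 0 < INR n) by (apply lt_0_INR; lia).
    assert (hm0 : 0 <= INR m) by apply pos_INR.
    set (s := INR n + INR m).
    assert (hs : 0 < s) by (unfold s; lra).
    assert (EG : Gamma (INR n + a + 1) = Gamma (s + b)) by (f_equal; unfold s, b; ring).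
    assert (HU := Gamma_upper s b hs hb).
    assert (HL := Gamma_lower s b hs hb).
    assert (HF : s * Gamma s = INR (fact (n + m))).
    { rewrite <- Gamma_succ by auto. rewrite <- Gamma_nat. f_equal. unfold s. rewrite plus_INR. ring. }
    assert (ED : Rpower (INR n) a = INR n ^ m * Rpower (INR n) (b - 1)).
    { replace a with (INR m + (b - 1)) by (unfold b; ring). rewrite Rpower_plus, Rpower_pow by auto. ring. }
    assert (Es : Rpower s b = Rpower s (b - 1) * s).
    { replace b with ((b - 1) + 1) at 1 by ring. rewrite Rpower_plus, Rpower_1 by auto. ring. }
    assert (Esb : Rpower (s + b) (1 - b) * Rpower (s + b) (b - 1) = 1).
    { rewrite <- Rpower_plus. replace (1 - b + (b - 1)) with 0 by ring. apply Rpower_O. lra. }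
    replace (INR n + (INR m + b)) with (s + b) by (unfold s; ring).
    fold s.
    rewrite <- !Rpower_div by lra. rewrite EG, ED.
    set (P := Rpower (INR n) (b - 1)). assert (hP : 0 < P) by apply Rpower_pos.
    set (D := INR (fact n) * INR n ^ m).
    assert (hD : 0 < D) by (unfold D; apply Rmult_lt_0_compat; [apply lt_0_INR, lt_O_fact | apply pow_lt; lra]).
    unfold A. fold D. set (F := INR (fact (n + m))) in *.
    assert (hDP : 0 < / (D * P)) by (apply Rinv_0_lt_compat, Rmult_lt_0_compat; auto).
    assert (hf : INR (fact n) <> 0) by apply INR_fact_neq_0.
    assert (hpw : INR n ^ m <> 0) by (apply pow_nonzero; lra).
    replace (Gamma (s + b) / (INR (fact n) * (INR n ^ m * P))) with (Gamma (s + b) * / (D * P))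
      by (unfold D; field; repeat split; auto; lra).
    pose proof (Rpower_pos (s + b) (1 - b)). pose proof (Rpower_pos (s + b) (b - 1)).
    pose proof (Rpower_pos s (b - 1)).
    split.
    + replace (F / D * (Rpower (s + b) (b - 1) / P)) with ((F * Rpower (s + b) (b - 1)) * / (D * P))
        by (field; repeat split; lra).
      apply Rmult_le_compat_r. lra.
      rewrite <- HF.
      apply Rle_trans with (Rpower (s + b) (1 - b) * Gamma (s + b) * Rpower (s + b) (b - 1)).
      apply Rmult_le_compat_r; lra.
      replace (Rpower (s + b) (1 - b) * Gamma (s + b) * Rpower (s + b) (b - 1))
        with (Gamma (s + b) * (Rpower (s + b) (1 - b) * Rpower (s + b) (b - 1))) by ring.
      rewrite Esb. lra.
    + replace (F / D * (Rpower s (b - 1) / P)) with ((Rpower s (b - 1) * F) * / (D * P))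
        by (field; repeat split; lra).
      apply Rmult_le_compat_r. lra.
      rewrite <- HF, <- Rmult_assoc, <- Es. auto.
  - pose proof (is_lim_seq_mult' _ _ _ _ (lim_fact_ratio m) (lim_Rpow _ (b - 1) (lim_ratio_shift (INR m + b)))) as H.
    rewrite Rmult_1_l in H. exact H.
  - pose proof (is_lim_seq_mult' _ _ _ _ (lim_fact_ratio m) (lim_Rpow _ (b - 1) (lim_ratio_shift (INR m)))) as H.
    rewrite Rmult_1_l in H. exact H.
Qed.


Lemma fold_map_iter (l : list nat) f : fold_right Rplus 0 (map f l) = Iter.iter Rplus 0 l f.
Proof. induction l; simpl; auto. rewrite IHl; auto. Qed.

Lemma iter_div (l : list nat) f c : Iter.iter Rplus 0 l f / c = Iter.iter Rplus 0 l (fun k => f k / c).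
Proof. induction l; simpl. unfold Rdiv; ring. rewrite <- IHl. unfold Rdiv; ring. Qed.

Lemma iter_zero (g : nat -> R) len s : (forall k, (s <= k < s + len)%nat -> g k = 0) ->
  Iter.iter Rplus 0 (seq s len) g = 0.
Proof.
  revert s. induction len; intros s H; simpl; auto.
  rewrite H by lia. rewrite IHlen. ring. intros; apply H; lia.
Qed.

Lemma iter_single (g : nat -> R) j : (forall k, k <> j -> g k = 0) -> forall len s, (s <= j < s + len)%nat ->
  Iter.iter Rplus 0 (seq s len) g = g j.
Proof.
  intros Hg. induction len; intros s hs. lia. simpl.
  destruct (Nat.eq_dec s j).
  - subst. rewrite iter_zero. ring. intros; apply Hg; lia.
  - rewrite Hg by auto. rewrite IHlen by lia. ring.
Qed.

Lemma laguerre_on_iter a n x :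
  laguerre_on a n x = Iter.iter Rplus 0 (seq 0 (S n))
    (fun k => ((-1) ^ k * binomR (INR n + a) (n - k) / INR (fact k) / sqrt (laguerre_norm2 a n)) * x ^ k).
Proof.
  unfold laguerre_on, laguerre, sumR. rewrite fold_map_iter, iter_div. rewrite Nat.sub_0_r.
  f_equal. apply functional_extensionality. intros k. unfold Rdiv. ring.
Qed.

Lemma Derive_n_lag a n j : (j <= n)%nat ->
  Derive_n (laguerre_on a n) j 0 = (-1) ^ j * binomR (INR n + a) (n - j) / sqrt (laguerre_norm2 a n).
Proof.
  intros hj.
  set (c := fun k => (-1) ^ k * binomR (INR n + a) (n - k) / INR (fact k) / sqrt (laguerre_norm2 a n)).
  rewrite (Derive_n_ext (laguerre_on a n) (fun y => Iter.iter Rplus 0 (seq 0 (S n)) (fun k => c k * y ^ k)))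
    by (intros; apply laguerre_on_iter).
  assert (Hloc : locally 0 (fun y => forall (k : nat) (m : nat), In k (seq 0 (S n)) -> (m <= j)%nat ->
            ex_derive_n (fun y => c k * y ^ k) m y)).
  { apply filter_forall. intros y k m _ _. apply ex_derive_n_scal_l, ex_derive_n_pow. }
  pose proof (is_derive_n_iter_plus (seq 0 (S n)) (fun k y => c k * y ^ k) j 0 Hloc) as H.
  apply is_derive_n_unique in H. cbv beta in H. rewrite H.
  rewrite (iter_single _ j).
  - rewrite Derive_n_scal_l, Derive_n_pow. destruct (le_dec j j); [|lia].
    rewrite Nat.sub_diag. simpl. unfold c.
    assert (hF := INR_fact_neq_0 j). unfold Rdiv. rewrite Rinv_1.
    transitivity ((-1) ^ j * binomR (INR n + a) (n - j) * / sqrt (laguerre_norm2 a n) * (INR (fact j) * / INR (fact j))).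
    ring. rewrite Rinv_r by auto. ring.
  - intros k hk. rewrite Derive_n_scal_l, Derive_n_pow. destruct (le_dec j k).
    rewrite pow_i by lia. ring. ring.
  - lia.
Qed.


Lemma prodR_ext f g m n : (forall p, f p = g p) -> prodR f m n = prodR g m n.
Proof. intros H. unfold prodR. f_equal. apply map_ext. auto. Qed.

Lemma prodR_0 f : prodR f 1 0 = 1.
Proof. reflexivity. Qed.

Lemma prodR_shift f k : prodR f 1 (S k) = f 1%nat * prodR (fun p => f (S p)) 1 k.
Proof.
  unfold prodR. replace (S (S k) - 1)%nat with (S k) by lia. replace (S k - 1)%nat with k by lia.
  simpl. f_equal. rewrite <- seq_shift, map_map. reflexivity.
Qed.

Lemma prod_gamma a j : -1 < a -> forall k,
  Gamma (INR j + a + 1) * prodR (fun p => INR (j + k) + a - INR p + 1) 1 k = Gamma (INR (j + k) + a + 1).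
Proof.
  intros ha k. induction k.
  - rewrite prodR_0, Nat.add_0_r. ring.
  - rewrite prodR_shift.
    rewrite (prodR_ext _ (fun p => INR (j + k) + a - INR p + 1)).
    2: { intros p. rewrite !plus_INR, !S_INR. ring. }
    replace (INR (j + S k) + a - INR 1 + 1) with (INR (j + k) + a + 1) by (rewrite !plus_INR, S_INR; simpl; ring).
    replace (INR (j + S k) + a + 1) with ((INR (j + k) + a + 1) + 1) by (rewrite !plus_INR, S_INR; ring).
    rewrite (Gamma_succ (INR (j + k) + a + 1)). rewrite <- IHk. ring.
    pose proof (pos_INR (j + k)). lra.
Qed.

Lemma binom_gamma a j n : -1 < a -> (j <= n)%nat ->
  binomR (INR n + a) (n - j) = Gamma (INR n + a + 1) / (Gamma (INR j + a + 1) * INR (fact (n - j))).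
Proof.
  intros ha hj. unfold binomR.
  pose proof (prod_gamma a j ha (n - j)) as H. replace (j + (n - j))%nat with n in H by lia.
  rewrite <- H. assert (0 < Gamma (INR j + a + 1)) by (apply Gamma_pos; pose proof (pos_INR j); lra).
  field. split. apply INR_fact_neq_0. lra.
Qed.

Definition Tn (a : R) (j n : nat) := (Derive_n (laguerre_on a n) j 0) ^ 2.

Lemma Tn_formula a j n : -1 < a -> (j <= n)%nat ->
  Tn a j n = Gamma (INR n + a + 1) * INR (fact n) /
             (Gamma (INR j + a + 1) ^ 2 * INR (fact (n - j)) ^ 2).
Proof.
  intros ha hj. unfold Tn. rewrite Derive_n_lag by auto.
  assert (hN : 0 < laguerre_norm2 a n).
  { unfold laguerre_norm2. apply Rdiv_lt_0_compat. apply Gamma_pos. pose proof (pos_INR n); lra.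
    apply lt_0_INR, lt_O_fact. }
  assert (hs : ((-1) ^ j) ^ 2 = 1).
  { rewrite <- pow_mult, Nat.mul_comm, pow_mult. replace ((-1) ^ 2) with 1 by ring. apply pow1. }
  unfold Rdiv. rewrite !Rpow_mult_distr, hs, pow_inv. rewrite <- (Rsqr_pow2 (sqrt (laguerre_norm2 a n))), Rsqr_sqrt by lra.
  rewrite binom_gamma by auto. unfold laguerre_norm2.
  assert (0 < Gamma (INR n + a + 1)) by (apply Gamma_pos; pose proof (pos_INR n); lra).
  assert (0 < Gamma (INR j + a + 1)) by (apply Gamma_pos; pose proof (pos_INR j); lra).
  assert (h1 := INR_fact_neq_0 n). assert (h2 := INR_fact_neq_0 (n - j)).
  field. repeat split; lra.
Qed.

Lemma lim_falling j : is_lim_seq (fun n => INR (fact n) / (INR (fact (n - j)) * INR n ^ j)) 1.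
Proof.
  induction j.
  - eapply is_lim_seq_ext; [| apply is_lim_seq_const]. intros n. simpl. rewrite Nat.sub_0_r.
    field. apply INR_fact_neq_0.
  - pose proof (is_lim_seq_mult' _ _ _ _ IHj (lim_one_plus (- INR j))) as H. rewrite Rmult_1_l in H.
    refine (is_lim_seq_ext_loc _ _ _ _ H).
    exists (S j). intros n hn.
    assert (hn' : 0 < INR n) by (apply lt_0_INR; lia).
    replace (n - j)%nat with (S (n - S j)) by lia. rewrite fact_simpl, mult_INR.
    replace (INR (S (n - S j))) with (INR n - INR j) by (rewrite S_INR, minus_INR, S_INR by lia; ring).
    simpl.
    assert (h1 := INR_fact_neq_0 (n - S j)). assert (h2 : INR n ^ j <> 0) by (apply pow_nonzero; lra).
    assert (h3 : INR n - INR j <> 0) by (apply le_INR in hn; rewrite S_INR in hn; lra).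
    field. repeat split; auto; lra.
Qed.

Lemma Tn_lim a j : -1 < a ->
  is_lim_seq (fun n => Tn a j n / Rpower (INR n) (2 * INR j + a)) (/ Gamma (INR j + a + 1) ^ 2).
Proof.
  intros ha.
  set (G0 := Gamma (INR j + a + 1)).
  assert (hG0 : 0 < G0) by (apply Gamma_pos; pose proof (pos_INR j); lra).
  pose proof (is_lim_seq_mult' _ _ _ _ (Gamma_ratio a ha)
     (is_lim_seq_mult' _ _ _ _ (lim_falling j) (lim_falling j))) as H.
  pose proof (is_lim_seq_mult' _ _ _ _ H (is_lim_seq_const (/ G0 ^ 2))) as H2.
  replace (1 * (1 * 1) * / G0 ^ 2) with (/ G0 ^ 2) in H2 by ring.
  refine (is_lim_seq_ext_loc _ _ _ _ H2).
  exists (S j). intros n hn.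
  assert (hn' : 0 < INR n) by (apply lt_0_INR; lia).
  rewrite Tn_formula by (auto; lia). fold G0.
  rewrite Rpower_plus. replace (2 * INR j) with (INR (2 * j)) by (rewrite mult_INR; simpl; ring).
  rewrite Rpower_pow by auto.
  assert (hP := Rpower_pos (INR n) a).
  assert (h1 := INR_fact_neq_0 n). assert (h2 := INR_fact_neq_0 (n - j)).
  assert (h3 : INR n ^ j <> 0) by (apply pow_nonzero; lra).
  assert (hG : 0 < Gamma (INR n + a + 1)) by (apply Gamma_pos; lra).
  replace (INR n ^ (2 * j)) with (INR n ^ j * INR n ^ j) by (rewrite Nat.mul_comm, pow_mult; ring).
  field. repeat split; lra.
Qed.


Lemma Rpow_inf_gen (v : nat -> R) q : 0 < q -> (forall n, INR n <= v n) ->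
  is_lim_seq (fun n => Rpower (v n) q) p_infty.
Proof.
  intros hq hv. apply is_lim_seq_spec. intros M.
  set (X := exp (Rabs M / q)).
  assert (hX : 0 < X) by apply exp_pos.
  destruct (archimed X) as [h1 _].
  assert (hz : (0 < up X)%Z) by (apply lt_0_IZR; lra).
  exists (Z.to_nat (up X)). intros n hn.
  apply le_INR in hn. rewrite INR_IZR_INZ, Z2Nat.id in hn by lia.
  specialize (hv n).
  assert (hl : ln X < ln (v n)) by (apply ln_increasing; lra).
  unfold X in hl. rewrite ln_exp in hl.
  assert (Rabs M < q * ln (v n)).
  { apply Rmult_lt_compat_l with (r := q) in hl; auto. replace (q * (Rabs M / q)) with (Rabs M) in hl by (field; lra). auto. }
  unfold Rpower. pose proof (exp_ineq1_le (q * ln (v n))). pose proof (Rle_abs M). lra.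
Qed.

Lemma inv_Rpow_0 (v : nat -> R) q : 0 < q -> (forall n, INR n <= v n) ->
  is_lim_seq (fun n => / Rpower (v n) q) 0.
Proof.
  intros hq hv. replace (Finite 0) with (Rbar_inv p_infty) by reflexivity.
  apply is_lim_seq_inv. apply Rpow_inf_gen; auto. discriminate.
Qed.

Lemma lim_inv_S : is_lim_seq (fun n => / (INR n + 1)) 0.
Proof.
  pose proof lim_inv_n as H. apply is_lim_seq_incr_1 in H.
  eapply is_lim_seq_ext; [| exact H]. intros n; cbv beta. rewrite S_INR. reflexivity.
Qed.

Lemma deriv_lim q : is_lim_seq (fun k => (Rpower (1 + / (INR k + 1)) q - 1) * (INR k + 1)) q.
Proof.
  apply is_lim_seq_Reals. intros eps heps.
  pose proof (derivable_pt_lim_power 1 q Rlt_0_1 eps heps) as [delta Hd].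
  pose proof (proj1 (is_lim_seq_Reals _ _) lim_inv_S delta (cond_pos delta)) as [N HN].
  exists N. intros n hn. specialize (HN n hn). unfold Rdist in HN. rewrite Rminus_0_r in HN.
  assert (hpos : 0 < INR n + 1) by (pose proof (pos_INR n); lra).
  assert (hh : / (INR n + 1) <> 0) by (apply Rinv_neq_0_compat; lra).
  specialize (Hd _ hh HN).
  replace (Rpower 1 (q - 1)) with 1 in Hd by (unfold Rpower; rewrite ln_1, Rmult_0_r, exp_0; auto).
  replace (Rpower 1 q) with 1 in Hd by (unfold Rpower; rewrite ln_1, Rmult_0_r, exp_0; auto).
  unfold Rdist. replace ((Rpower (1 + / (INR n + 1)) q - 1) * (INR n + 1)) with
    ((Rpower (1 + / (INR n + 1)) q - 1) / / (INR n + 1)) by (field; lra).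
  replace q with (q * 1) at 2 by ring. auto.
Qed.

Lemma telesc q n : sum_f_R0 (fun k => Rpower (INR k + 2) q - Rpower (INR k + 1) q) n = Rpower (INR n + 2) q - 1.
Proof.
  induction n.
  - simpl. replace (0 + 1) with 1 by ring. replace (Rpower 1 q) with 1 by (unfold Rpower; rewrite ln_1, Rmult_0_r, exp_0; auto). auto.
  - rewrite tech5, IHn. rewrite S_INR. replace (INR n + 1 + 1) with (INR n + 2) by ring. replace (INR n + 1 + 2) with (INR (S n) + 2) by (rewrite S_INR; ring). ring.
Qed.

Lemma Rpow_step x q : 0 < x -> Rpower (x + 1) q = Rpower x q * Rpower (1 + / x) q.
Proof.
  intros hx. assert (0 < / x) by (apply Rinv_0_lt_compat; auto).
  rewrite Rpower_mult_distr by lra. f_equal. field. lra.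
Qed.

Lemma Rpow_qm1 x q : 0 < x -> Rpower x q = Rpower x (q - 1) * x.
Proof.
  intros hx. replace q with ((q - 1) + 1) at 1 by ring. rewrite Rpower_plus, Rpower_1 by auto. auto.
Qed.

Lemma sum_lim (u : nat -> R) (q c : R) : 0 < q ->
  is_lim_seq (fun n => u n / Rpower (INR n) (q - 1)) c ->
  is_lim_seq (fun n => sum_f_R0 u n / Rpower (INR n) q) (c / q).
Proof.
  intros hq Hu.
  set (w := fun k => Rpower (INR k + 2) q - Rpower (INR k + 1) q).
  assert (hw : forall k, 0 < w k).
  { intros k. unfold w. pose proof (pos_INR k). apply Rlt_Rminus, Rpower_lt_base; lra. }
  assert (Ew : forall k, w k = Rpower (INR k + 1) q * (Rpower (1 + / (INR k + 1)) q - 1)).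
  { intros k. unfold w. replace (INR k + 2) with ((INR k + 1) + 1) by ring.
    rewrite Rpow_step by (pose proof (pos_INR k); lra). ring. }
  set (B := fun k => u (S k) / w k).
  assert (HB : is_lim_seq B (c / q)).
  { assert (Hnum : is_lim_seq (fun k => u (S k) / Rpower (INR k + 1) (q - 1)) c).
    { apply is_lim_seq_incr_1 in Hu. eapply is_lim_seq_ext; [| exact Hu]. intros n; cbv beta.
      rewrite S_INR. reflexivity. }
    assert (Hden : is_lim_seq (fun k => w k / Rpower (INR k + 1) (q - 1)) q).
    { eapply is_lim_seq_ext; [| apply deriv_lim]. intros k; cbv beta.
      pose proof (pos_INR k). rewrite Ew, (Rpow_qm1 (INR k + 1)) by lra.
      assert (0 < Rpower (INR k + 1) (q - 1)) by apply Rpower_pos. field. lra. }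
    pose proof (is_lim_seq_div' _ _ _ _ Hnum Hden ltac:(lra)) as H.
    eapply is_lim_seq_ext; [| exact H]. intros k; cbv beta. unfold B.
    assert (0 < Rpower (INR k + 1) (q - 1)) by apply Rpower_pos. specialize (hw k).
    field. lra. }
  assert (HS : forall n, sum_f_R0 w n = Rpower (INR n + 2) q - 1) by (intros; apply telesc).
  assert (Hinf : cv_infty (fun n => sum_f_R0 w n)).
  { intros M. pose proof (proj2 (is_lim_seq_spec _ _) (Rpow_inf_gen (fun n => INR n + 2) q hq ltac:(intros; lra)) (M + 1)) as [N HN].
    exists N. intros n hn. rewrite HS. specialize (HN n hn). simpl in HN. lra. }
  pose proof (Cesaro w B (c / q) (proj1 (is_lim_seq_Reals _ _) HB) hw Hinf) as HC.
  apply is_lim_seq_Reals in HC.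
  assert (HC' : is_lim_seq (fun n => sum_f_R0 (fun k => u (S k)) n / (Rpower (INR n + 2) q - 1)) (c / q)).
  { eapply is_lim_seq_ext; [| exact HC]. intros n; cbv beta. rewrite HS. f_equal.
    apply sum_eq. intros i _. unfold B. specialize (hw i). field. lra. }
  assert (L1 : is_lim_seq (fun n => / Rpower (INR n + 1) q) 0).
  { apply inv_Rpow_0; auto. intros; lra. }
  assert (L2 : is_lim_seq (fun n => Rpower (1 + / (INR n + 1)) q) 1).
  { apply lim_Rpow. pose proof (is_lim_seq_plus' _ _ _ _ (is_lim_seq_const 1) lim_inv_S) as H.
    rewrite Rplus_0_r in H. exact H. }
  pose proof (is_lim_seq_plus' _ _ _ _ (is_lim_seq_mult' _ _ _ _ (is_lim_seq_const (u 0%nat)) L1)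
                (is_lim_seq_mult' _ _ _ _ HC' (is_lim_seq_minus' _ _ _ _ L2 L1))) as H.
  replace (u 0%nat * 0 + c / q * (1 - 0)) with (c / q) in H by ring.
  apply is_lim_seq_incr_1.
  eapply is_lim_seq_ext; [| exact H]. intros n; cbv beta.
  rewrite (decomp_sum u (S n)) by lia. simpl pred. rewrite S_INR.
  assert (hn : 0 < INR n + 1) by (pose proof (pos_INR n); lra).
  assert (hR : Rpower (INR n + 2) q = Rpower (INR n + 1) q * Rpower (1 + / (INR n + 1)) q).
  { replace (INR n + 2) with ((INR n + 1) + 1) by ring. apply Rpow_step; auto. }
  assert (h1 : 1 < Rpower (INR n + 2) q).
  { replace 1 with (Rpower 1 q) at 1 by (unfold Rpower; rewrite ln_1, Rmult_0_r, exp_0; auto).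
    apply Rpower_lt_base; lra. }
  assert (hP := Rpower_pos (INR n + 1) q).
  rewrite hR in *.
  field. lra.
Qed.


Lemma fold_plus_acc (l : list R) x : fold_right Rplus x l = fold_right Rplus 0 l + x.
Proof. induction l; simpl. ring. rewrite IHl. ring. Qed.

Lemma sumR_rec f m n : (m <= S n)%nat -> sumR f m (S n) = sumR f m n + f (S n).
Proof.
  intros h. unfold sumR. replace (S (S n) - m)%nat with (S (S n - m)) by lia.
  rewrite seq_S, map_app, fold_right_app. cbn [map fold_right]. rewrite fold_plus_acc.
  replace (m + (S n - m))%nat with (S n) by lia. ring.
Qed.

Lemma sumR_0 f n : sumR f 0 n = sum_f_R0 f n.
Proof.
  induction n. unfold sumR. simpl. ring.
  rewrite sumR_rec by lia. rewrite IHn. simpl. ring.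
Qed.

Lemma Kjj_sum a j n : Kjj a j n = sum_f_R0 (Tn a j) n.
Proof. unfold Kjj. rewrite sumR_0. reflexivity. Qed.

Theorem mainTheorem6 (a M : R) (j : nat) (ha : -1 < a) (hM : 0 < M) :
  is_lim_seq
    (fun n : nat => lam_tilde a M j n / Rpower (INR n) (2 * INR j + a + 2))
    (M / ((2 * INR j + a + 2) * (2 * INR j + a + 1) * (Gamma (a + INR j + 1)) ^ 2)).
Proof.
  set (K := fun n => sum_f_R0 (Tn a j) n).
  set (q1 := 2 * INR j + a + 1). set (q2 := 2 * INR j + a + 2).
  assert (hj := pos_INR j).
  assert (hq1 : 0 < q1) by (unfold q1; lra). assert (hq2 : 0 < q2) by (unfold q2; lra).
  set (G0 := Gamma (INR j + a + 1)).
  assert (hG0 : 0 < G0) by (apply Gamma_pos; lra).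
  assert (HK : is_lim_seq (fun n => K n / Rpower (INR n) q1) (/ G0 ^ 2 / q1)).
  { apply sum_lim; auto. replace (q1 - 1) with (2 * INR j + a) by (unfold q1; ring). apply Tn_lim; auto. }
  assert (HS : is_lim_seq (fun n => sum_f_R0 K n / Rpower (INR n) q2) (/ G0 ^ 2 / q1 / q2)).
  { apply sum_lim; auto. replace (q2 - 1) with q1 by (unfold q1, q2; ring). auto. }
  set (F := fun i => (lam i - lam (i - 1)) * Kjj a j (i - 1)).
  set (E := fun n => sumR F (j + 1) (S n) - sum_f_R0 K n).
  assert (HE : forall k, E (j + k)%nat = E j).
  { induction k. rewrite Nat.add_0_r; auto.
    rewrite <- IHk. replace (j + S k)%nat with (S (j + k)) by lia. unfold E.
    rewrite (sumR_rec F (j + 1) (S (j + k))) by lia.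
    replace (sum_f_R0 K (S (j + k))) with (sum_f_R0 K (j + k) + K (S (j + k))) by reflexivity.
    unfold F, lam. replace (S (S (j + k)) - 1)%nat with (S (j + k)) by lia.
    rewrite Kjj_sum. fold (K (S (j + k))). rewrite !S_INR. ring. }
  set (E0 := E j).
  assert (Hlt : forall n, (j <= n)%nat -> lam_tilde a M j (S n) = INR (S n) + M * (sum_f_R0 K n + E0)).
  { intros n hn. pose proof (HE (n - j)%nat) as H. replace (j + (n - j))%nat with n in H by lia.
    fold E0 in H. unfold E in H. unfold lam_tilde. fold F. unfold lam at 1. rewrite <- H. ring. }
  assert (P1 : is_lim_seq (fun n => INR (S n) / Rpower (INR (S n)) q2) 0).
  { eapply is_lim_seq_ext; [| apply (inv_Rpow_0 (fun n => INR (S n)) q1 hq1)].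
    - intros n; cbv beta. assert (hx : 0 < INR (S n)) by (apply lt_0_INR; lia).
      rewrite (Rpow_qm1 (INR (S n)) q2) by auto. replace (q2 - 1) with q1 by (unfold q1, q2; ring).
      assert (0 < Rpower (INR (S n)) q1) by apply Rpower_pos. field. lra.
    - intros n. apply le_INR. lia. }
  assert (P2 : is_lim_seq (fun n => / Rpower (INR (S n)) q2) 0).
  { apply (inv_Rpow_0 (fun n => INR (S n)) q2 hq2). intros n. apply le_INR. lia. }
  assert (P3 : is_lim_seq (fun n => Rpower (INR n) q2 / Rpower (INR (S n)) q2) 1).
  { pose proof (is_lim_seq_div' _ _ _ _ (is_lim_seq_const 1) (lim_Rpow _ q2 (lim_one_plus 1)) ltac:(lra)) as H.
    replace (1 / 1) with 1 in H by field.
    refine (is_lim_seq_ext_loc _ _ _ _ H). exists 1%nat. intros n hn.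
    assert (hx : 0 < INR n) by (apply lt_0_INR; lia).
    rewrite S_INR, Rpow_step by auto.
    replace (1 + 1 / INR n) with (1 + / INR n) by (field; lra).
    assert (0 < Rpower (INR n) q2) by apply Rpower_pos.
    assert (0 < Rpower (1 + / INR n) q2) by apply Rpower_pos.
    field. lra. }
  pose proof (is_lim_seq_plus' _ _ _ _ (is_lim_seq_plus' _ _ _ _ P1
      (is_lim_seq_mult' _ _ _ _ (is_lim_seq_const M) (is_lim_seq_mult' _ _ _ _ HS P3)))
      (is_lim_seq_mult' _ _ _ _ (is_lim_seq_const (M * E0)) P2)) as H.
  replace (0 + M * (/ G0 ^ 2 / q1 / q2 * 1) + M * E0 * 0) with
    (M / ((2 * INR j + a + 2) * (2 * INR j + a + 1) * Gamma (a + INR j + 1) ^ 2)) in H.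
  2: { replace (Gamma (a + INR j + 1)) with G0 by (unfold G0; f_equal; ring).
       fold q1 q2. replace (2 * INR j + a + 2) with q2 by reflexivity. field. repeat split; lra. }
  apply is_lim_seq_incr_1.
  refine (is_lim_seq_ext_loc _ _ _ _ H). exists (S j). intros n hn.
  rewrite Hlt by lia. fold q2.
  assert (hx : 0 < INR n) by (apply lt_0_INR; lia).
  assert (0 < Rpower (INR n) q2) by apply Rpower_pos.
  assert (0 < Rpower (INR (S n)) q2) by apply Rpower_pos.
  field. repeat split; lra.
Qed.
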